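(* Let $n\ge q\ge 2$ be integers and put $S_1=\sqrt{q^2+4(q-1)(n-2)}$. Let $d$ be an integer and define $j$ by $d=n-1-\frac{n-2+j}{q}$ (so $j=q(n-1-d)-n+2$), and assume $j\in\left[0,\frac{S_1-q}{2}\right)$. Put $s=1-\frac{2d}{n}$, $d_0=n-\frac{j(n-1)}{q(j+q-1)}$, and let $e$ be the unique rational number in $(0,1]$ such that $d_0+e$ is an integer. Define $$f(t)=\Big(t+1+\tfrac{2e}{n}-\tfrac{2j(n-1)}{nq(j+q-1)}\Big)\Big(t+1+\tfrac{2(e-1)}{n}-\tfrac{2j(n-1)}{nq(j+q-1)}\Big)(t-s),$$ and write its Krawtchouk expansion as $f(t)=f_0+f_1Q_1^{(n,q)}(t)+f_2Q_2^{(n,q)}(t)+f_3Q_3^{(n,q)}(t)$. Then $f_1>0$.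
   Context: For integers $n,q$ and $0\le i\le n$, the Krawtchouk polynomial is $K_i^{(n,q)}(z)=\sum_{l=0}^{i}(-1)^l(q-1)^{i-l}\binom{z}{l}\binom{n-z}{i-l}$, and the normalized Krawtchouk polynomial is $Q_i^{(n,q)}(t)=\frac{1}{r_i}K_i^{(n,q)}\!\big(\tfrac{n(1-t)}{2}\big)$ with $r_i=(q-1)^i\binom{n}{i}$; every real polynomial of degree $m\le n$ in $t$ has a unique expansion $\sum_{i=0}^m f_iQ_i^{(n,q)}(t)$. *)

(* Defs.v *)
From mathcomp Require Import all_boot all_order all_algebra.
Set Implicit Arguments. Unset Strict Implicit. Unset Printing Implicit Defensive.
Import Order.TTheory GRing.Theory Num.Theory.
Local Open Scope ring_scope.

Section Kraw.
Variable R : rcfType.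

Definition binomp (p : {poly R}) (l : nat) : {poly R} :=
  (l`!%:R)^-1 *: \prod_(k < l) (p - (k%:R)%:P).

Definition kraw_z (n : nat) : {poly R} := (n%:R / 2) *: (1 - 'X).

(* K_i^{(n,q)}(n(1-t)/2) as a polynomial in t *)
Definition kraw_K (n q i : nat) : {poly R} :=
  \sum_(l < i.+1)
     (((-1) ^+ l * (q%:R - 1) ^+ (i - l)) *:
        (binomp (kraw_z n) l * binomp ((n%:R)%:P - kraw_z n) (i - l))).

Definition kraw_r (n q i : nat) : R := (q%:R - 1) ^+ i * ('C(n, i))%:R.

Definition kraw_Q (n q i : nat) : {poly R} := (kraw_r n q i)^-1 *: kraw_K n q i.

End Kraw.

(* Main.v *)
Require Import Defs.
From mathcomp Require Import all_boot all_order all_algebra.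
From mathcomp Require Import ring lra.
Import Order.TTheory GRing.Theory Num.Theory.
Local Open Scope ring_scope.

Section S.
Variable R : rcfType.

Lemma binomp_ev (p : {poly R}) l x :
  (binomp p l).[x] = (l`!%:R)^-1 * \prod_(k < l) (p.[x] - k%:R).
Proof.
rewrite /binomp hornerZ horner_prod; congr (_ * _).
by apply: eq_bigr => k _; rewrite hornerD hornerN hornerC.
Qed.

Lemma krawz_ev n x : (kraw_z R n).[x] = n%:R / 2 * (1 - x).
Proof. by rewrite /kraw_z hornerZ hornerD hornerN hornerX hornerC. Qed.

Lemma bin2R m : ('C(m,2)%:R : R) * 2 = m%:R * (m%:R - 1).
Proof.
elim: m => [|m IH]; first by rewrite bin0n mul0r mul0r.
rewrite binS bin1 natrD mulrDl IH -addn1 natrD; ring.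
Qed.

Lemma bin3R m : ('C(m,3)%:R : R) * 6 = m%:R * (m%:R - 1) * (m%:R - 2).
Proof.
elim: m => [|m IH]; first by rewrite bin0n !mul0r.
rewrite binS natrD mulrDl IH.
have := bin2R m. rewrite -addn1 natrD => H.
have -> : ('C(m, 2)%:R : R) * 6 = 3 * (('C(m,2)%:R) * 2) by ring.
rewrite H; ring.
Qed.

Lemma K3_ev n q x : (kraw_K R n q 3).[x] =
  let z := n%:R / 2 * (1 - x) in
  (q%:R - 1)^+3 * ((n%:R - z) * (n%:R - z - 1) * (n%:R - z - 2) / 6)
  - (q%:R - 1)^+2 * z * ((n%:R - z) * (n%:R - z - 1) / 2)
  + (q%:R - 1) * (z * (z - 1) / 2) * (n%:R - z)
  - z * (z - 1) * (z - 2) / 6.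
Proof.
rewrite /kraw_K horner_sum !big_ord_recr big_ord0 /=.
rewrite !hornerZ !hornerM !binomp_ev !big_ord_recr !big_ord0 /=.
rewrite !hornerD !hornerN !hornerC !krawz_ev.
rewrite !subn0 ?subnn ?factS fact0 /=. by field.
Qed.

Lemma K1_ev n q x : (kraw_K R n q 1).[x] =
  let z := n%:R / 2 * (1 - x) in (q%:R - 1) * (n%:R - z) - z.
Proof.
rewrite /kraw_K horner_sum !big_ord_recr big_ord0 /=.
rewrite !hornerZ !hornerM !binomp_ev !big_ord_recr !big_ord0 /=.
rewrite !hornerD !hornerN !hornerC !krawz_ev.
rewrite !subn0 ?subnn ?factS fact0 /=. by field.
Qed.

Lemma K2_ev n q x : (kraw_K R n q 2).[x] =
  let z := n%:R / 2 * (1 - x) in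
  (q%:R - 1)^+2 * ((n%:R - z) * (n%:R - z - 1) / 2)
  - (q%:R - 1) * z * (n%:R - z) + z * (z - 1) / 2.
Proof.
rewrite /kraw_K horner_sum !big_ord_recr big_ord0 /=.
rewrite !hornerZ !hornerM !binomp_ev !big_ord_recr !big_ord0 /=.
rewrite !hornerD !hornerN !hornerC !krawz_ev.
rewrite !subn0 ?subnn ?factS fact0 /=. by field.
Qed.

Definition q1f (N Qr z : R) := ((Qr - 1) * (N - z) - z) / ((Qr - 1) * N).
Definition q2f (N Qr z : R) :=
  ((Qr - 1)^+2 * ((N - z) * (N - z - 1) / 2) - (Qr - 1) * z * (N - z)
    + z * (z - 1) / 2) / ((Qr - 1)^+2 * (N * (N - 1) / 2)).
Definition q3f (N Qr z : R) :=
  ((Qr - 1)^+3 * ((N - z) * (N - z - 1) * (N - z - 2) / 6)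
  - (Qr - 1)^+2 * z * ((N - z) * (N - z - 1) / 2)
  + (Qr - 1) * (z * (z - 1) / 2) * (N - z)
  - z * (z - 1) * (z - 2) / 6) / ((Qr - 1)^+3 * (N * (N - 1) * (N - 2) / 6)).

Lemma Q1_ev n q x : (kraw_Q R n q 1).[x] = q1f n%:R q%:R (n%:R / 2 * (1 - x)).
Proof. by rewrite /kraw_Q hornerZ K1_ev /kraw_r bin1 expr1 mulrC. Qed.

Lemma Q2_ev n q x : (kraw_Q R n q 2).[x] = q2f n%:R q%:R (n%:R / 2 * (1 - x)).
Proof.
rewrite /kraw_Q hornerZ K2_ev /kraw_r mulrC /q2f.
have -> : ('C(n,2)%:R : R) = n%:R * (n%:R - 1) / 2.
  by rewrite -bin2R mulfK // pnatr_eq0.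
done.
Qed.

Lemma Q3_ev n q x : (kraw_Q R n q 3).[x] = q3f n%:R q%:R (n%:R / 2 * (1 - x)).
Proof.
rewrite /kraw_Q hornerZ K3_ev /kraw_r mulrC /q3f.
have -> : ('C(n,3)%:R : R) = n%:R * (n%:R - 1) * (n%:R - 2) / 6.
  by rewrite -bin3R mulfK // pnatr_eq0.
done.
Qed.

Definition Lfun (N Qr : R) (g : R -> R) : R :=
  let p := (Qr - 1) / Qr in
  let mu := N * p in
  let B1 := N in
  let B2 := N * (N - 1) / 2 in
  let B3 := N * (N - 1) * (N - 2) / 6 in
  let B4 := N * (N - 1) * (N - 2) * (N - 3) / 24 in
  let c0 := 1 - B1 * p + B2 * p^+2 - B3 * p^+3 + B4 * p^+4 in
  let c1 := B1 * p - 2 * B2 * p^+2 + 3 * B3 * p^+3 - 4 * B4 * p^+4 in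
  let c2 := B2 * p^+2 - 3 * B3 * p^+3 + 6 * B4 * p^+4 in
  let c3 := B3 * p^+3 - 4 * B4 * p^+4 in
  let c4 := B4 * p^+4 in
  Qr * (c0 * mu * g 0 + c1 * (mu - 1) * g 1 + c2 * (mu - 2) * g 2
        + c3 * (mu - 3) * g 3 + c4 * (mu - 4) * g 4).

Lemma Lfun_lin N Qr a b c d g1 g2 g3 :
  Lfun N Qr (fun z => a + b * g1 z + c * g2 z + d * g3 z) =
  a * Lfun N Qr (fun=> 1) + b * Lfun N Qr g1 + c * Lfun N Qr g2 + d * Lfun N Qr g3.
Proof. rewrite /Lfun; ring. Qed.

Section L.
Variables N Qr : R.
Hypotheses (hN : N != 0) (hN1 : N - 1 != 0) (hN2 : N - 2 != 0)
  (hQ : Qr != 0) (hQ1 : Qr - 1 != 0).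
Lemma L0 : Lfun N Qr (fun=> 1) = 0.
Proof. rewrite /Lfun; by field. Qed.
Lemma L1 : Lfun N Qr (q1f N Qr) = 1.
Proof. rewrite /Lfun /q1f; field; by rewrite ?hN ?hN1 ?hN2 ?hQ ?hQ1. Qed.
Lemma L2 : Lfun N Qr (q2f N Qr) = 0.
Proof. rewrite /Lfun /q2f; field; by rewrite ?hN ?hN1 ?hN2 ?hQ ?hQ1. Qed.
Lemma L3 : Lfun N Qr (q3f N Qr) = 0.
Proof. rewrite /Lfun /q3f; field; by rewrite ?hN ?hN1 ?hN2 ?hQ ?hQ1. Qed.
End L.
End S.
Arguments q1f {R}. Arguments q2f {R}. Arguments q3f {R}. Arguments Lfun {R}.

Theorem lemma2 (R : rcfType) (n q : nat) (d : int) (e : R)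
  (f0 f1 f2 f3 : R) :
  (2 <= q)%N -> (q <= n)%N ->
  let S1 : R := Num.sqrt (q%:R ^+ 2 + 4 * (q%:R - 1) * (n%:R - 2)) in
  let j : int := (q%:Z * (n%:Z - 1 - d) - n%:Z + 2)%R in
  (0 <= j)%R ->
  j%:~R < (S1 - q%:R) / 2 ->
  let jr : R := j%:~R in
  let s : R := 1 - 2 * d%:~R / n%:R in
  let d0 : R := n%:R - jr * (n%:R - 1) / (q%:R * (jr + q%:R - 1)) in
  0 < e -> e <= 1 -> (exists k : int, d0 + e = k%:~R) ->
  let c : R := 2 * jr * (n%:R - 1) / (n%:R * q%:R * (jr + q%:R - 1)) in
  let f : {poly R} :=
    ('X + (1 + 2 * e / n%:R - c)%:P) *
    ('X + (1 + 2 * (e - 1) / n%:R - c)%:P) * ('X - s%:P) in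
  f = f0%:P + f1 *: kraw_Q R n q 1 + f2 *: kraw_Q R n q 2
      + f3 *: kraw_Q R n q 3 ->
  0 < f1.
Proof.
move=> hq hqn S1 j hj0 hjS jr s d0 he0 he1 _ c f Hf.
have hQ2 : 2 <= q%:R :> R by rewrite ler_nat.
have hNQ : q%:R <= n%:R :> R by rewrite ler_nat.
have hjr0 : 0 <= jr by rewrite /jr ler0z.
have Hjd : jr = q%:R * (n%:R - 1 - d%:~R) - n%:R + 2.
  by rewrite /jr /j !(rmorphB, rmorphD, rmorphM) /= !pmulrn.
have hS : 0 <= q%:R ^+ 2 + 4 * (q%:R - 1) * (n%:R - 2) :> R.
  have h1 : 0 <= (q%:R - 1) * (n%:R - 2) :> R by apply: mulr_ge0; lra.
  have h2 : 0 <= q%:R ^+ 2 :> R by apply: sqr_ge0.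
  lra.
have hJ : jr ^+ 2 + q%:R * jr < (q%:R - 1) * (n%:R - 2).
  have h1 : 2 * jr + q%:R < S1 by lra.
  have h2 : S1 ^+ 2 = q%:R ^+ 2 + 4 * (q%:R - 1) * (n%:R - 2) by rewrite sqr_sqrtr.
  have h3 : (2 * jr + q%:R) ^+ 2 < S1 ^+ 2.
    rewrite -subr_gt0 subr_sqr; apply: mulr_gt0; lra.
  rewrite h2 in h3; nra.
have hN2 : 0 < n%:R - 2 :> R.
  have h1 : 0 <= jr ^+ 2 + q%:R * jr by nra.
  nra.
have hN0 : (n%:R : R) != 0 by apply: lt0r_neq0; lra.
have hN1 : (n%:R - 1 : R) != 0 by apply: lt0r_neq0; lra.
have hN2' : (n%:R - 2 : R) != 0 by apply: lt0r_neq0; lra.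
have hQ0 : (q%:R : R) != 0 by apply: lt0r_neq0; lra.
have hQ1 : (q%:R - 1 : R) != 0 by apply: lt0r_neq0; lra.
have hJQ : (jr + q%:R - 1 : R) != 0 by apply: lt0r_neq0; lra.
have E m : f.[1 - 2 * m / n%:R] = f0 + f1 * q1f n%:R q%:R m
    + f2 * q2f n%:R q%:R m + f3 * q3f n%:R q%:R m.
  rewrite Hf !hornerD hornerC (hornerZ f1) (hornerZ f2) (hornerZ f3) Q1_ev Q2_ev Q3_ev.
  have -> : n%:R / 2 * (1 - (1 - 2 * m / n%:R)) = m by field.
  done.
have key : f1 = Lfun n%:R q%:R (fun m => f.[1 - 2 * m / n%:R]).
  have -> : Lfun n%:R q%:R (fun m => f.[1 - 2 * m / n%:R]) =
    Lfun n%:R q%:R (fun m => f0 + f1 * q1f n%:R q%:R m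
    + f2 * q2f n%:R q%:R m + f3 * q3f n%:R q%:R m).
    by rewrite /Lfun !E.
  rewrite Lfun_lin L0 ?L1 ?L2 ?L3 //; ring.
rewrite key.
have HD : (d%:~R : R) = n%:R - 1 - (jr + n%:R - 2) / q%:R.
  by rewrite Hjd; field.
pose al := (n%:R * (q%:R - 1) + jr) / (q%:R * (jr + q%:R - 1)) + e.
pose Cp := (4*(q%:R-1)*(3*n%:R-2) + 8*jr - 4*jr^+2 - 4*jr*q%:R - q%:R^+2)/(4*q%:R^+2).
have -> : Lfun n%:R q%:R (fun m => f.[1 - 2 * m / n%:R]) =
  8 * q%:R / n%:R^+3 * (n%:R * (q%:R - 1) / q%:R^+2) *
  ((al - (2*jr + q%:R)/(2*q%:R))^+2 + Cp).
  rewrite /Lfun /f /s /c /al /Cp HD !hornerE /=.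
  field.
  by rewrite hQ0 hJQ hN0.
have hCp : 0 < Cp.
  rewrite /Cp; apply: divr_gt0; last first.
    apply: mulr_gt0; first lra.
    by apply: exprn_gt0; lra.
  have h1 : 0 <= (n%:R - q%:R) * (q%:R - 1) :> R by apply: mulr_ge0; lra.
  have h2 : 0 <= q%:R * (q%:R - 2) :> R by apply: mulr_ge0; lra.
  nra.
have hsq := sqr_ge0 (al - (2 * jr + q%:R) / (2 * q%:R)).
apply: mulr_gt0; last lra.
apply: mulr_gt0; apply: divr_gt0.
- lra.
- by apply: exprn_gt0; lra.
- apply: mulr_gt0; lra.
- by apply: exprn_gt0; lra.
Qed.
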